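(* Let $\mathcal{M}$ and $\mathcal{M}'$ be MRTA instances with the same robots $R$ and tasks $T$, whose cost functions $c$ and $c'$ are injective on the edge set $E$ of the robot-task graph and differ only in the cost of a single edge $e$. Let $\textsc{Auction}(\mathcal{M})=(W=(w_k),a)$ and let $U=(u_k)$ denote the edges with second-best bids on $\textsc{Auction}(\mathcal{M})$. Then $\textsc{Assign}(\mathcal{M}')=\textsc{Assign}(\mathcal{M})$ if either (1) $e$ does not appear in $W$ and $c'(e)>\max_{k\in B_e}c(w_k)$; (2) $e=w_K\in W$ with $|B_e|=1$ and $c(u_K)>c'(e)\ge0$; or (3) $e=w_K\in W$ with $|B_e|>1$ and $c(u_K)>c'(e)>\max_{k\in B_e\setminus\{K\}}c(w_k)$.
   Context: $R$ (robots) and $T$ (tasks) are finite disjoint sets with $R\neq\emptyset$, $|R\sqcup T|\ge3$. The robot-task graph has vertex set $R\sqcup T$, edge set $E$ consisting of all 2-element subsets of $R\sqcup T$, and non-negative edge costs $c:E\to\mathbb{R}_+$; injective means distinct edges have distinct costs. $\textsc{Auction}(\mathcal{M})$: set $A=\emptyset$ and $a(r)=0$ for all $r\in R$. For $k=1,\dots,|T|$: let $w_k=\{s,t\}$ be the edge with $s\in R\cup A$, $t\in T\setminus A$ minimising $c(\{s,t\})$; set $a(t)=k$ and $A\leftarrow A\cup\{t\}$. Output $W=(w_1,\dots,w_{|T|})$ and $a:R\sqcup T\to\{0,\dots,|T|\}$. $\textsc{DFShortcut}$: the edges of $W$ form a forest each of whose components contains exactly one robot. For each robot $r$ let $V(r)$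 be the vertex set of its component; start with $P(r)=(r)$ and, while $P(r)$ does not contain all of $V(r)$, scan the vertices of $P(r)$ from last to first, and at the first vertex $t$ having a $W$-neighbour not yet in $P(r)$, append the such neighbour $s$ with smallest $a(s)$. Output the plan $\{P(r):r\in R\}$. $\textsc{Assign}(\mathcal{M})$ is the result of applying $\textsc{DFShortcut}$ to $\textsc{Auction}(\mathcal{M})$. For $e=\{x,y\}$, $B_e=\{k\in\mathbb{Z}:\min(a(x),a(y))<k\le\max(a(x),a(y))\}$. The edge with second-best bid in round $k$ is the edge $u_k\ne w_k$ with $k\in B_{u_k}$ such that $c(u_k)\le c(f)$ for all edges $f\ne w_k$ with $k\in B_f$. *)

(* Defs.v *)
From HB Require Import structures.
From mathcomp Require Import all_boot all_order all_algebra.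
From mathcomp Require Import reals.
Set Implicit Arguments. Unset Strict Implicit. Unset Printing Implicit Defensive.
Import Order.TTheory GRing.Theory Num.Theory.
Local Open Scope ring_scope.

(* Robots [Rb] and tasks [Tb] are finite types; the vertex set of the
   robot-task graph is the disjoint union [Rb + Tb] (inl = robot, inr = task).
   An edge is a 2-element subset of vertices; costs are functions on sets of
   vertices, only their values on edges matter. *)

Notation vert Rb Tb := (Rb + Tb)%type.

Definition is_edge (Rb Tb : finType) (e : {set vert Rb Tb}) : bool := #|e| == 2%N.

Definition nonneg_costs (R : realType) (Rb Tb : finType)
  (c : {set vert Rb Tb} -> R) : Prop :=
  forall e, is_edge e -> 0 <= c e.

Definition injective_costs (R : realType) (Rb Tb : finType)
  (c : {set vert Rb Tb} -> R) : Prop :=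
  forall e f, is_edge e -> is_edge f -> c e = c f -> e = f.

Definition bid_edge (Rb Tb : finType) (p : vert Rb Tb * Tb) : {set vert Rb Tb} :=
  [set p.1; inr p.2].

(* candidate bids in a round where A is the set of assigned tasks:
   s in R \cup A, t in T \ A *)
Definition candidate (Rb Tb : finType) (A : {set Tb}) (p : vert Rb Tb * Tb) : bool :=
  [&& (match p.1 with inl _ => true | inr t' => t' \in A end) & p.2 \notin A].

(* the candidate bid minimising the cost (unique when costs are injective) *)
Definition best_bid (R : realType) (Rb Tb : finType)
  (c : {set vert Rb Tb} -> R) (A : {set Tb}) : option (vert Rb Tb * Tb) :=
  [pick p | candidate A p &&
     [forall q, candidate A q ==> (c (bid_edge p) <= c (bid_edge q))]].

Fixpoint auction_rec (R : realType) (Rb Tb : finType)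
  (c : {set vert Rb Tb} -> R) (n : nat) (A : {set Tb}) : seq (vert Rb Tb * Tb) :=
  match n with
  | 0 => [::]
  | n'.+1 =>
      match best_bid c A with
      | Some p => p :: auction_rec c n' (p.2 |: A)
      | None => [::]
      end
  end.

Definition auction_bids (R : realType) (Rb Tb : finType)
  (c : {set vert Rb Tb} -> R) : seq (vert Rb Tb * Tb) :=
  auction_rec c #|Tb| set0.

Definition auction_W (R : realType) (Rb Tb : finType)
  (c : {set vert Rb Tb} -> R) : seq {set vert Rb Tb} :=
  map (@bid_edge Rb Tb) (auction_bids c).

(* w_k, for 1 <= k <= |T| (1-indexed) *)
Definition w_round (R : realType) (Rb Tb : finType)
  (c : {set vert Rb Tb} -> R) (k : nat) : {set vert Rb Tb} :=
  nth set0 (auction_W c) k.-1.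

(* the labelling a : R \sqcup T -> {0, ..., |T|}: a(r) = 0, a(t) = k if t was
   assigned in round k *)
Definition auction_a (R : realType) (Rb Tb : finType)
  (c : {set vert Rb Tb} -> R) (v : vert Rb Tb) : nat :=
  match v with
  | inl _ => 0%N
  | inr t => (index t (unzip2 (auction_bids c))).+1
  end.

Definition wadj (Rb Tb : finType) (W : seq (vert Rb Tb * Tb)) : rel (vert Rb Tb) :=
  fun u v => has (fun p => ((p.1 == u) && (inr p.2 == v)) ||
                           ((p.1 == v) && (inr p.2 == u))) W.

Definition dfs_step (Rb Tb : finType) (W : seq (vert Rb Tb * Tb))
  (a : vert Rb Tb -> nat) (Vr : {set vert Rb Tb}) (P : seq (vert Rb Tb))
  : seq (vert Rb Tb) :=
  if Vr \subset P then P else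
  match [seq v <- rev P | has (fun s => wadj W v s && (s \notin P)) (enum [set: vert Rb Tb])] with
  | t :: _ =>
      match sort (fun x y => (a x <= a y)%N)
                 [seq s <- enum [set: vert Rb Tb] | wadj W t s && (s \notin P)] with
      | s :: _ => rcons P s
      | [::] => P
      end
  | [::] => P
  end.

Definition comp_of (Rb Tb : finType) (W : seq (vert Rb Tb * Tb)) (r : Rb)
  : {set vert Rb Tb} :=
  [set v | connect (wadj W) (inl r) v].

(* DFShortcut applied to (W, a); each step adds one vertex, so
   #|R \sqcup T| iterations suffice to finish the while loop *)
Definition dfshortcut (Rb Tb : finType) (W : seq (vert Rb Tb * Tb))
  (a : vert Rb Tb -> nat) : {ffun Rb -> seq (vert Rb Tb)} :=
  [ffun r => iter #|[set: vert Rb Tb]| (dfs_step W a (comp_of W r)) [:: inl r]].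

Definition assign (R : realType) (Rb Tb : finType)
  (c : {set vert Rb Tb} -> R) : {ffun Rb -> seq (vert Rb Tb)} :=
  dfshortcut (auction_bids c) (auction_a c).

Definition inB (R : realType) (Rb Tb : finType)
  (c : {set vert Rb Tb} -> R) (e : {set vert Rb Tb}) (k : nat) : bool :=
  [exists x in e, exists y in e, (auction_a c x < k <= auction_a c y)%N].

Definition B_seq (R : realType) (Rb Tb : finType)
  (c : {set vert Rb Tb} -> R) (e : {set vert Rb Tb}) : seq nat :=
  [seq k <- iota 0 (\max_(v in e) auction_a c v).+1 | inB c e k].

Definition second_best (R : realType) (Rb Tb : finType)
  (c : {set vert Rb Tb} -> R) (k : nat) (u : {set vert Rb Tb}) : Prop :=
  [/\ is_edge u, u != w_round c k, inB c u k &
      forall f, is_edge f -> f != w_round c k -> inB c f k -> c u <= c f].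

(* Main.v *)
Require Import Defs.
From HB Require Import structures.
From mathcomp Require Import all_boot all_order all_algebra.
From mathcomp Require Import reals.
Import Order.TTheory GRing.Theory Num.Theory.
Set Implicit Arguments. Unset Strict Implicit. Unset Printing Implicit Defensive.
Local Open Scope ring_scope.

Definition Aset (Rb Tb : finType) (s : seq (vert Rb Tb * Tb)) (A : {set Tb}) (j : nat) :
  {set Tb} := A :|: [set t | t \in take j (unzip2 s)].

Lemma Aset0 (Rb Tb : finType) (s : seq (vert Rb Tb * Tb)) A : Aset s A 0 = A.
Proof. by apply/setP=> t; rewrite /Aset !inE take0 in_nil orbF. Qed.

Lemma Aset_cons (Rb Tb : finType) p (s : seq (vert Rb Tb * Tb)) A j :
  Aset (p :: s) A j.+1 = Aset s (p.2 |: A) j.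
Proof. by apply/setP=> t; rewrite /Aset !inE -/(take _ _) -/(unzip2 _) orbA (orbC (t == _)). Qed.

Lemma rec_some (R : realType) (Rb Tb : finType) (c : {set vert Rb Tb} -> R) n A j :
  (j < size (auction_rec c n A))%N ->
  forall x0, best_bid c (Aset (auction_rec c n A) A j) = Some (nth x0 (auction_rec c n A) j).
Proof.
elim: n A j => [|n IH] A j //=.
case E: (best_bid c A) => [p|] //= Hj x0.
case: j Hj => [|j] Hj; first by rewrite Aset0.
by rewrite Aset_cons /= (IH _ _ _ x0).
Qed.

Lemma rec_none (R : realType) (Rb Tb : finType) (c : {set vert Rb Tb} -> R) n A :
  (size (auction_rec c n A) < n)%N ->
  best_bid c (Aset (auction_rec c n A) A (size (auction_rec c n A))) = None.
Proof.
elim: n A => [|n IH] A //=.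
case E: (best_bid c A) => [p|] //= Hj; last by rewrite Aset0.
by rewrite Aset_cons IH.
Qed.

Lemma rec_eq (R : realType) (Rb Tb : finType) (c c' : {set vert Rb Tb} -> R) n A :
  (forall j, (j < n)%N -> (j <= size (auction_rec c n A))%N ->
     best_bid c' (Aset (auction_rec c n A) A j) = best_bid c (Aset (auction_rec c n A) A j)) ->
  auction_rec c' n A = auction_rec c n A.
Proof.
elim: n A => [|n IH] A //= H.
have := H 0%N isT isT; rewrite !Aset0 => ->.
case E: (best_bid c A) => [p|] //=; congr cons; apply: IH => j Hj Hs.
have := H j.+1 Hj; rewrite E /= Aset_cons; exact.
Qed.

Lemma ex_min (R : realType) (T : finType) (P : pred T) (F : T -> R) x0 :
  P x0 -> exists2 y, P y & forall z, P z -> F y <= F z.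
Proof.
move=> Px0; case: (@arg_minP _ _ _ x0 P F Px0) => y Py Hy.
by exists y.
Qed.

Lemma cand_neq (Rb Tb : finType) A (p : vert Rb Tb * Tb) : candidate A p -> p.1 != inr p.2.
Proof.
case: p => [[r|t'] t] /andP [] //= H1 H2.
by apply/eqP=> [[E]]; move: H2; rewrite -E H1.
Qed.

Lemma cand_edge (Rb Tb : finType) A (p : vert Rb Tb * Tb) : candidate A p -> is_edge (bid_edge p).
Proof. by move=> /cand_neq H; rewrite /is_edge /bid_edge cards2 H. Qed.

Lemma cand_inj (Rb Tb : finType) A (p q : vert Rb Tb * Tb) :
  candidate A p -> candidate A q -> bid_edge p = bid_edge q -> p = q.
Proof.
case: p => s t; case: q => s' t' Hp Hq E.
have Hpn := cand_neq Hp; have Hqn := cand_neq Hq.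
move: Hp Hq => /andP [/= Hs Ht] /andP [/= Hs' Ht'].
have : inr t \in bid_edge (s', t') by rewrite -E /bid_edge /= !inE eqxx orbT.
rewrite /bid_edge /= !inE => /orP [/eqP Es'|/eqP [Et]].
  by move: Hs'; rewrite -Es' (negbTE Ht).
subst t'.
have : s \in bid_edge (s', t) by rewrite -E /bid_edge /= !inE eqxx.
rewrite /bid_edge /= !inE => /orP [/eqP -> //|/eqP Es].
by rewrite Es eqxx in Hpn.
Qed.

Lemma best_spec (R : realType) (Rb Tb : finType) (c : {set vert Rb Tb} -> R) A p :
  best_bid c A = Some p ->
  candidate A p /\ forall q, candidate A q -> c (bid_edge p) <= c (bid_edge q).
Proof.
rewrite /best_bid; case: pickP => // x /andP [Hx /forallP H] [<-]; split=> // q Hq.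
exact: (implyP (H q)).
Qed.

Lemma best_same (R : realType) (Rb Tb : finType) (c c' : {set vert Rb Tb} -> R) A p :
  injective_costs c' -> best_bid c A = Some p ->
  (forall q, candidate A q -> c' (bid_edge p) <= c' (bid_edge q)) -> best_bid c' A = Some p.
Proof.
move=> Hinj /best_spec [Hp _] Hmin.
rewrite /best_bid; case: pickP => [x /andP [Hx /forallP H]|H].
  congr Some; apply: (cand_inj Hx Hp); apply: Hinj; [exact: cand_edge Hx|exact: cand_edge Hp|].
  by apply/le_anti; rewrite (implyP (H p) Hp) Hmin.
have := H p; rewrite Hp /=; move/negbT/negP; case; apply/forallP=> q; apply/implyP; exact: Hmin.
Qed.

Lemma best_none (R : realType) (Rb Tb : finType) (c c' : {set vert Rb Tb} -> R) A :
  best_bid c A = None -> best_bid c' A = None.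
Proof.
move=> Hn; rewrite /best_bid; case: pickP => // x /andP [Hx _].
have [y Hy Hmin] := ex_min (fun q => c (bid_edge q)) Hx.
move: Hn; rewrite /best_bid; case: pickP => // H _.
have := H y; rewrite Hy /=; move/negbT/negP; case; apply/forallP=> q; apply/implyP; exact: Hmin.
Qed.

Lemma idx_take (T : eqType) (x : T) s j : x \in take j s -> (index x s < j)%N.
Proof.
rewrite -{2}(cat_take_drop j s) index_cat => H; rewrite H.
apply: (@leq_trans (size (take j s))); first by rewrite index_mem.
by rewrite size_take_min geq_minl.
Qed.

Lemma idx_notake (T : eqType) (x : T) s j : (j <= size s)%N -> x \notin take j s -> (j <= index x s)%N.
Proof.
move=> Hj Hx; rewrite -(cat_take_drop j s) index_cat (negbTE Hx) size_takel //.
exact: leq_addr.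
Qed.

Lemma Ab_some (R : realType) (Rb Tb : finType) (c : {set vert Rb Tb} -> R) j x0 :
  (j < size (auction_bids c))%N ->
  best_bid c (Aset (auction_bids c) set0 j) = Some (nth x0 (auction_bids c) j).
Proof. rewrite /auction_bids => H; exact: rec_some. Qed.

Lemma a_in (R : realType) (Rb Tb : finType) (c : {set vert Rb Tb} -> R) j t :
  t \in Aset (auction_bids c) set0 j -> (auction_a c (inr t) <= j)%N.
Proof. by rewrite /Aset !inE /= => /idx_take. Qed.

Lemma a_notin (R : realType) (Rb Tb : finType) (c : {set vert Rb Tb} -> R) j t :
  (j <= size (auction_bids c))%N ->
  t \notin Aset (auction_bids c) set0 j -> (j < auction_a c (inr t))%N.
Proof.
rewrite /Aset !inE /= => Hj Ht; rewrite ltnS; apply: idx_notake => //.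
by rewrite size_map.
Qed.

Lemma cand_a (R : realType) (Rb Tb : finType) (c : {set vert Rb Tb} -> R) j q :
  (j <= size (auction_bids c))%N -> candidate (Aset (auction_bids c) set0 j) q ->
  (auction_a c q.1 <= j)%N /\ (j < auction_a c (inr q.2))%N.
Proof.
case: q => [[r|t'] t] Hj /andP [/= H1 H2]; split; try exact: a_notin.
  by [].
exact: a_in.
Qed.

Lemma cand_inB (R : realType) (Rb Tb : finType) (c : {set vert Rb Tb} -> R) j q :
  (j <= size (auction_bids c))%N -> candidate (Aset (auction_bids c) set0 j) q ->
  inB c (bid_edge q) j.+1.
Proof.
move=> Hj Hq; have [H1 H2] := cand_a Hj Hq.
apply/existsP; exists q.1; rewrite /bid_edge !inE eqxx /=.
apply/existsP; exists (inr q.2); rewrite !inE eqxx orbT /=.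
by rewrite ltnS H1 H2.
Qed.

Lemma w_eq (R : realType) (Rb Tb : finType) (c : {set vert Rb Tb} -> R) j x0 :
  (j < size (auction_bids c))%N -> w_round c j.+1 = bid_edge (nth x0 (auction_bids c) j).
Proof. by move=> Hj; rewrite /w_round /auction_W /= (nth_map x0). Qed.

Lemma cand_nth (R : realType) (Rb Tb : finType) (c : {set vert Rb Tb} -> R) j x0 :
  (j < size (auction_bids c))%N ->
  candidate (Aset (auction_bids c) set0 j) (nth x0 (auction_bids c) j).
Proof. by move=> Hj; case: (best_spec (Ab_some x0 Hj)). Qed.

Lemma a_win (R : realType) (Rb Tb : finType) (c : {set vert Rb Tb} -> R) j x0 :
  (j < size (auction_bids c))%N -> auction_a c (inr (nth x0 (auction_bids c) j).2) = j.+1.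
Proof.
move=> Hj; apply/eqP; rewrite eqn_leq; apply/andP; split; last first.
  by case: (cand_a (ltnW Hj) (cand_nth x0 Hj)).
rewrite /= ltnS -ltnS; apply: idx_take.
rewrite (take_nth x0.2); last by rewrite size_map.
by rewrite mem_rcons in_cons (nth_map x0) // eqxx.
Qed.

Lemma w_bound (R : realType) (Rb Tb : finType) (c : {set vert Rb Tb} -> R) j :
  (j < size (auction_bids c))%N -> forall v, v \in w_round c j.+1 -> (auction_a c v <= j.+1)%N.
Proof.
move=> Hj v; case E: (auction_bids c) Hj => [|x0 s] // Hj.
rewrite -E in Hj *.
rewrite (w_eq x0 Hj) /bid_edge !inE => /orP [/eqP ->|/eqP ->].
  by case: (cand_a (ltnW Hj) (cand_nth x0 Hj)) => H _; apply: leqW.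
by rewrite a_win.
Qed.

Lemma w_top (R : realType) (Rb Tb : finType) (c : {set vert Rb Tb} -> R) j :
  (j < size (auction_bids c))%N -> exists2 v, v \in w_round c j.+1 & auction_a c v = j.+1.
Proof.
move=> Hj; case E: (auction_bids c) Hj => [|x0 s] // Hj.
rewrite -E in Hj *.
exists (inr (nth x0 (auction_bids c) j).2); last by rewrite a_win.
by rewrite (w_eq x0 Hj) /bid_edge !inE eqxx orbT.
Qed.

Lemma w_inj (R : realType) (Rb Tb : finType) (c : {set vert Rb Tb} -> R) j j' :
  (j < size (auction_bids c))%N -> (j' < size (auction_bids c))%N ->
  w_round c j.+1 = w_round c j'.+1 -> j = j'.
Proof.
move=> Hj Hj' E; apply/eqP; rewrite eqn_leq; apply/andP; split.
  have [v Hv Ha] := w_top Hj; rewrite E in Hv.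
  by have := w_bound Hj' Hv; rewrite Ha.
have [v Hv Ha] := w_top Hj'; rewrite -E in Hv.
by have := w_bound Hj Hv; rewrite Ha.
Qed.

Lemma inB_mem (R : realType) (Rb Tb : finType) (c : {set vert Rb Tb} -> R) e k :
  inB c e k -> k \in B_seq c e.
Proof.
move=> H; rewrite /B_seq mem_filter H -/(iota 0 _) mem_iota /= add0n ltnS.
move: H => /existsP [x /andP [Hx /existsP [y /andP [Hy /andP [_ Hk]]]]].
by apply: (leq_trans Hk); apply: leq_bigmax_cond.
Qed.

Lemma wK_inB (R : realType) (Rb Tb : finType) (c : {set vert Rb Tb} -> R) K :
  (0 < K <= size (auction_W c))%N -> inB c (w_round c K) K.
Proof.
case: K => [|K] //; rewrite /auction_W size_map /= => HK.
case E: (auction_bids c) HK => [|x0 s] //; rewrite -E => HK.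
rewrite (w_eq x0 HK); apply: cand_inB (ltnW HK) (cand_nth x0 HK).
Qed.

Theorem corollary8 (R : realType) (Rb Tb : finType)
  (c c' : {set vert Rb Tb} -> R) (e : {set vert Rb Tb}) :
  (0 < #|Rb|)%N ->
  (3 <= #|Rb| + #|Tb|)%N ->
  nonneg_costs c -> nonneg_costs c' ->
  injective_costs c -> injective_costs c' ->
  is_edge e ->
  (forall f, is_edge f -> f != e -> c' f = c f) ->
  ( (* (1) *)
    (e \notin auction_W c /\ (forall k, k \in B_seq c e -> c (w_round c k) < c' e))
    \/
    (* (2) *)
    (exists K : nat, [/\ (0 < K <= size (auction_W c))%N, e = w_round c K,
        size (B_seq c e) = 1%N,
        (forall u, second_best c K u -> c' e < c u) & 0 <= c' e])
    \/
    (* (3) *)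
    (exists K : nat, [/\ (0 < K <= size (auction_W c))%N, e = w_round c K,
        (1 < size (B_seq c e))%N,
        (forall u, second_best c K u -> c' e < c u) &
        (forall k, k \in B_seq c e -> k != K -> c (w_round c k) < c' e)]) ) ->
  assign c' = assign c.
Proof.
move=> _ _ _ _ Hinjc Hinjc' He Hce Hcase.
have Hbids : auction_bids c' = auction_bids c.
  rewrite /auction_bids; apply: rec_eq => j Hj Hs.
  rewrite -/(auction_bids c) in Hs *.
  case: (ltnP j (size (auction_bids c))) => Hjs; last first.
    have Ej : j = size (auction_bids c) by apply/eqP; rewrite eqn_leq Hs Hjs.
    have Hn : best_bid c (Aset (auction_bids c) set0 j) = None.
      by rewrite Ej /auction_bids rec_none // -/(auction_bids c) -Ej.
    by rewrite Hn; apply: best_none Hn.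
  case E: (auction_bids c) Hjs => [|x0 s] //; rewrite -E => Hjs.
  rewrite (Ab_some x0 Hjs); apply: best_same => //; first exact: Ab_some.
  have Hp := cand_nth x0 Hjs.
  have [_ Hpmin] := best_spec (Ab_some x0 Hjs).
  set p := nth x0 _ j in Hp Hpmin *.
  move=> q Hq.
  have Hep := cand_edge Hp; have Hef := cand_edge Hq.
  have Hwp : w_round c j.+1 = bid_edge p by exact: w_eq.
  have HinBq : inB c (bid_edge q) j.+1 := cand_inB (ltnW Hjs) Hq.
  have Hpq := Hpmin q Hq.
  have Hsz : size (auction_W c) = size (auction_bids c) by rewrite /auction_W size_map.
  case: (eqVneq (bid_edge p) e) => Hpe; case: (eqVneq (bid_edge q) e) => Hqe.
  - by rewrite Hpe Hqe.
  - rewrite (Hce _ Hef Hqe) Hpe.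
    have key : forall K, (0 < K <= size (auction_W c))%N -> e = w_round c K ->
        (forall u, second_best c K u -> c' e < c u) -> c' e <= c (bid_edge q).
      move=> [|K] // HK HeK Hu.
      rewrite Hsz /= in HK.
      have EK : j = K by apply: w_inj Hjs HK _; rewrite -HeK Hwp.
      subst K.
      have Px : (fun f => [&& is_edge f, f != w_round c j.+1 & inB c f j.+1]) (bid_edge q).
        by rewrite /= Hef HinBq Hwp Hpe Hqe.
      have [u /and3P [Hu1 Hu2 Hu3] Humin] := @ex_min R _ (fun f => [&& is_edge f, f != w_round c j.+1 & inB c f j.+1]) c _ Px.
      apply: ltW; apply: (lt_le_trans (Hu u _)); first by split=> // f Hf1 Hf2 Hf3; apply: Humin; rewrite /= Hf1 Hf2.
      exact: Humin.
    case: Hcase => [[HnW _]|[[K [HK HeK _ Hu _]]|[K [HK HeK _ Hu _]]]]; last 2 first.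
    + exact: key HK HeK Hu.
    + exact: key HK HeK Hu.
    exfalso; move/negP: HnW; apply; rewrite -Hpe -Hwp /w_round /=.
    by apply: mem_nth; rewrite Hsz.
  - rewrite (Hce _ Hep Hpe) Hqe.
    have Hmem : j.+1 \in B_seq c e by apply: inB_mem; rewrite -Hqe.
    case: Hcase => [[_ Hlt]|[[K [HK HeK H1 _ _]]|[K [HK HeK _ _ Hlt]]]].
    + by rewrite -Hwp; apply: ltW; apply: Hlt.
    + exfalso.
      have HKm : K \in B_seq c e by apply: inB_mem; rewrite HeK; apply: wK_inB.
      move: Hmem HKm H1; case: (B_seq c e) => [|z [|z' l]] //= ; rewrite !inE => /eqP Ej /eqP EK _.
      by move/eqP: Hpe; apply; rewrite -Hwp HeK Ej -EK.
    + rewrite -Hwp; apply: ltW; apply: Hlt => //.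
      apply/eqP=> EK; move/eqP: Hpe; apply; by rewrite -Hwp EK HeK.
  - by rewrite (Hce _ Hep Hpe) (Hce _ Hef Hqe).
by rewrite /assign /auction_a Hbids.
Qed.
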